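(* Let $\mathcal Z=\{0,1\}$. For every $\delta>0$ there exist an (even) integer $k$ and a zero-error variable-length $(k,N)$ network code for the network in the context with $k/\mathrm EN\ge \frac45-\delta$. Consequently the computing capacity satisfies $\mathcal C\ge 4/5$.
   Context: Network: sources $s_1,s_2,s_3$, terminal $t$, edges $(s_3,s_1),(s_3,s_2),(s_1,t),(s_2,t)$; $s_j$ observes $\mathbf X_j\in\{0,1\}^k$, all $3k$ bits i.i.d. uniform on $\{0,1\}$; $s_1,s_2$ receive $\mathbf X_3$. A variable-length $(k,N)$ network code: encoders $\phi_1,\phi_2:\{0,1\}^k\times\{0,1\}^k\to\mathcal Z^*$ (finite sequences over $\mathcal Z$) giving $\mathbf Z_1=\phi_1(\mathbf X_1,\mathbf X_3)$ and $\mathbf Z_2=\phi_2(\mathbf X_2,\mathbf X_3)$; a positive-integer-valued stopping time $N$ for the sequence of pairs $(\mathbf Z_1(m),\mathbf Z_2(m))_{m\ge1}$; a decoder $\hat{\boldsymbol\Sigma}=\psi(\mathbf Z_1^N,\mathbf Z_2^N)\in\{0,1,2,3\}^k$, $\mathbf Z_j^N$ the first $N$ symbols. Zero-error means $\Pr(\hat{\boldsymbol\Sigma}\neq\mathbf X_1+\mathbf X_2+\mathbf X_3)=0$ (componentwise integer sum). The rate is $k/(\mathrm EN\log_2|\mathcal Z|)$ and $\mathcal C$ is the supremum of rates over all zero-error codes and all $k$. *)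

(* Defs.v *)
From mathcomp Require Import all_boot.
From Stdlib Require Import Reals.

Set Implicit Arguments.
Unset Strict Implicit.
Unset Printing Implicit Defensive.

(* Code alphabet Z = {0,1} = bool; source messages X_j are k-tuples of bits;
   the target X1+X2+X3 (componentwise integer sum) lies in {0,1,2,3}^k = 'I_4^k. *)
Record VLCode (k : nat) := {
  enc1 : k.-tuple bool -> k.-tuple bool -> seq bool;
  enc2 : k.-tuple bool -> k.-tuple bool -> seq bool;
  stopN : k.-tuple bool -> k.-tuple bool -> k.-tuple bool -> nat;
  dec : seq bool -> seq bool -> k.-tuple 'I_4
}.

Section Code.
Variables (k : nat) (c : VLCode k).

Definition Z1 (x1 x2 x3 : k.-tuple bool) : seq bool := enc1 c x1 x3.
Definition Z2 (x1 x2 x3 : k.-tuple bool) : seq bool := enc2 c x2 x3.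

Definition Zpairs (x1 x2 x3 : k.-tuple bool) : seq (bool * bool) :=
  zip (Z1 x1 x2 x3) (Z2 x1 x2 x3).

(* N is a positive-integer-valued stopping time for (Z1(m),Z2(m))_m:
   the event {N = n} is determined by the first n pairs (every input has
   positive probability, so this is the pointwise form), and the first N
   symbols of each Z_j exist. *)
Definition valid_stopping_time : Prop :=
  forall x1 x2 x3 : k.-tuple bool,
    [/\ 1 <= stopN c x1 x2 x3,
        stopN c x1 x2 x3 <= size (Z1 x1 x2 x3),
        stopN c x1 x2 x3 <= size (Z2 x1 x2 x3) &
        forall y1 y2 y3 : k.-tuple bool,
          take (stopN c x1 x2 x3) (Zpairs y1 y2 y3)
            = take (stopN c x1 x2 x3) (Zpairs x1 x2 x3) ->
          stopN c y1 y2 y3 = stopN c x1 x2 x3].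

Definition target (x1 x2 x3 : k.-tuple bool) : k.-tuple 'I_4 :=
  [tuple (inord (nat_of_bool (tnth x1 i) + tnth x2 i + tnth x3 i) : 'I_4) | i < k].

(* Zero error: Pr(decoded != X1+X2+X3) = 0; all 2^(3k) inputs have positive
   probability, so this means correctness on every input. *)
Definition zero_error : Prop :=
  forall x1 x2 x3 : k.-tuple bool,
    let n := stopN c x1 x2 x3 in
    dec c (take n (Z1 x1 x2 x3)) (take n (Z2 x1 x2 x3)) = target x1 x2 x3.

Definition zero_error_code : Prop := valid_stopping_time /\ zero_error.

(* E N for i.i.d. uniform bits, i.e. uniform (X1,X2,X3) over ({0,1}^k)^3 *)
Definition sumN : nat :=
  \sum_(x1 : k.-tuple bool) \sum_(x2 : k.-tuple bool) \sum_(x3 : k.-tuple bool)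
     stopN c x1 x2 x3.

Definition ExpN : R := Rdiv (INR sumN) (INR (2 ^ (3 * k))).

(* rate = k / (E N * log2 |Z|) with |Z| = 2, so log2 |Z| = 1 *)
Definition rate : R := Rdiv (INR k) (Rmult ExpN (Rdiv (ln (INR 2)) (ln 2))).

End Code.

(* rates achieved by zero-error codes (over all k); the computing capacity is
   the supremum of this set *)
Definition achievable_rate (r : R) : Prop :=
  exists (k : nat) (c : VLCode k), zero_error_code c /\ r = rate c.

(* Main.v *)
Require Import Defs.
From mathcomp Require Import all_boot zify.
Set Implicit Arguments. Unset Strict Implicit. Unset Printing Implicit Defensive.


Fixpoint xorl (s t : seq bool) : seq bool :=
  match s, t with a :: s', b :: t' => (a != b) :: xorl s' t' | _, _ => [::] end.
Definition zc (s : seq bool) := count negb s.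
Fixpoint rebuild (u e : seq bool) : seq bool :=
  match u with
  | [::] => [::]
  | b :: u' => if b then false :: rebuild u' e
               else head false e :: rebuild u' (behead e)
  end.
Fixpoint cnt (p x c : seq bool) : nat :=
  match p, x, c with
  | q :: p', y :: x', e :: c' => (q && (y == e)) + cnt p' x' c'
  | _, _, _ => 0 end.

Lemma take_zip (S T : Type) n (s : seq S) (t : seq T) :
  take n (zip s t) = zip (take n s) (take n t).
Proof. by elim: n s t => [|n IH] [|a s] [|b t] //=; rewrite IH. Qed.

Lemma size_xorl s t : size (xorl s t) = minn (size s) (size t).
Proof. by elim: s t => [|a s IH] [|b t] //=; rewrite IH minnSS. Qed.

Lemma nth_xorl s t i : i < minn (size s) (size t) ->
  nth false (xorl s t) i = (nth false s i != nth false t i).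
Proof.
elim: s t i => [|a s IH] [|b t] [|i] //=; rewrite ?minnSS ?ltnS ?minn0 //.
by move=> /IH.
Qed.

Lemma rebuild_cat u e e' : zc u <= size e -> rebuild u (e ++ e') = rebuild u e.
Proof.
elim: u e => [|b u IH] e //=; case: b => /=; first by move=> h; rewrite IH.
case: e => [|a e] //= h; by rewrite IH.
Qed.

Lemma rebuild_mask u x i : size x = size u -> i < size u -> ~~ nth false u i ->
  nth false (rebuild u (mask (map negb u) x)) i = nth false x i.
Proof.
elim: u x i => [|b u IH] [|a x] [|i] //= [hs]; rewrite ?ltnS.
- by case: b.
- by case: b => /= hi hn; apply: IH.
Qed.

Lemma zc_le s : zc s <= size s.
Proof. exact: count_size. Qed.

Lemma cnt_false r x c : cnt (nseq r false) x c = 0.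
Proof. elim: r x c => [|r IH] x c /=; first by case: x; case: c. by case: x => [|a x]; case: c => [|e c] //=; rewrite IH. Qed.

Lemma cnt_true r x c : size x = r -> size c = r -> cnt (nseq r true) x c = zc (xorl x c).
Proof.
elim: r x c => [|r IH] x c; case: x => [|a x]; case: c => [|e c] //= [hx] [hc].
by rewrite IH // /zc /= negbK.
Qed.

Lemma cnt_take m r x c : size x = m + r -> size c = m + r ->
  zc (xorl (take m x) (take m c)) = cnt (nseq m true ++ nseq r false) x c.
Proof.
elim: m x c => [|m IH] x c hx hc /=.
  by rewrite !take0 cnt_false.
case: x c hx hc => [|a x] [|e c] //= [hx] [hc].
by rewrite -IH // /zc /= negbK.
Qed.

Lemma cnt_drop m r x c : size x = m + r -> size c = m + r ->
  zc (xorl (drop m x) (drop m c)) = cnt (nseq m false ++ nseq r true) x c.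
Proof.
elim: m x c => [|m IH] x c hx hc /=.
  by rewrite !drop0 cnt_true.
case: x c hx hc => [|a x] [|e c] //= [hx] [hc].
by rewrite -IH.
Qed.

Lemma zip_take_inj (a a' b b' : seq bool) N :
  N <= size a -> N <= size b -> N <= size a' -> N <= size b' ->
  take N (zip a b) = take N (zip a' b') -> take N a = take N a' /\ take N b = take N b'.
Proof.
move=> ha hb ha' hb'; rewrite !take_zip => E.
have s1 : forall s : seq bool, N <= size s -> size (take N s) = N by move=> s h; rewrite size_takel.
split.
- by rewrite -(unzip1_zip (s:=take N a) (t:=take N b)) ?s1 // E unzip1_zip ?s1.
- by rewrite -(unzip2_zip (s:=take N a) (t:=take N b)) ?s1 // E unzip2_zip ?s1.
Qed.

Lemma take_drop_take (s : seq bool) n m N : m + n <= N ->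
  take m (drop n (take N s)) = take m (drop n s).
Proof. by move=> h; rewrite !take_drop take_takel. Qed.


Section C.
Variable m : nat.
Local Notation k := (m + m).

Definition e1 (x1 x3 : k.-tuple bool) : seq bool :=
  let u := xorl (take m x1) (take m x3) in
  u ++ drop m x1 ++ mask (map negb u) (take m x3) ++ nseq m false.
Definition e2 (x2 x3 : k.-tuple bool) : seq bool :=
  let v := xorl (drop m x2) (drop m x3) in
  take m x2 ++ v ++ mask (map negb v) (drop m x3) ++ nseq m false.
Definition sN (x1 x2 x3 : k.-tuple bool) : nat :=
  k + maxn (zc (take m (e1 x1 x3))) (zc (take m (drop m (e2 x2 x3)))).
Definition decv (s1 s2 : seq bool) (i : nat) : nat :=
  if i < m then
    let u := take m s1 in let x2 := take m s2 in
    let x3 := rebuild u (drop k s1) in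
    if nth false u i then 1 + nth false x2 i else nth false x2 i + 2 * nth false x3 i
  else
    let j := i - m in
    let v := take m (drop m s2) in let x1 := take m (drop m s1) in
    let x3 := rebuild v (drop k s2) in
    if nth false v j then nth false x1 j + 1 else nth false x1 j + 2 * nth false x3 j.
Definition dd (s1 s2 : seq bool) : k.-tuple 'I_4 :=
  [tuple (inord (decv s1 s2 i) : 'I_4) | i < k].

Definition code : VLCode k := Build_VLCode e1 e2 sN dd.

Lemma sz (x : k.-tuple bool) : size x = k. Proof. exact: size_tuple. Qed.
Lemma sztake (x : k.-tuple bool) : size (take m x) = m.
Proof. by rewrite size_takel // sz leq_addr. Qed.
Lemma szdrop (x : k.-tuple bool) : size (drop m x) = m.
Proof. by rewrite size_drop sz addnK. Qed.
Lemma szu (x y : k.-tuple bool) : size (xorl (take m x) (take m y)) = m.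
Proof. by rewrite size_xorl !sztake minnn. Qed.
Lemma szv (x y : k.-tuple bool) : size (xorl (drop m x) (drop m y)) = m.
Proof. by rewrite size_xorl !szdrop minnn. Qed.

Lemma e1_take x1 x3 : take m (e1 x1 x3) = xorl (take m x1) (take m x3).
Proof. by rewrite /e1 take_size_cat // szu. Qed.
Lemma e2_take x2 x3 : take m (drop m (e2 x2 x3)) = xorl (drop m x2) (drop m x3).
Proof. by rewrite /e2 drop_size_cat ?sztake // take_size_cat // szv. Qed.

Lemma sN_le x1 x2 x3 : sN x1 x2 x3 <= k + m.
Proof.
rewrite /sN e1_take e2_take leq_add2l geq_max.
apply/andP; split.
  by have := zc_le (xorl (take m x1) (take m x3)); rewrite szu.
by have := zc_le (xorl (drop m x2) (drop m x3)); rewrite szv.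
Qed.

Lemma size_e1 x1 x3 : k + m <= size (e1 x1 x3).
Proof. rewrite /e1 !size_cat szu szdrop size_nseq; lia. Qed.
Lemma size_e2 x2 x3 : k + m <= size (e2 x2 x3).
Proof. rewrite /e2 !size_cat szv sztake size_nseq; lia. Qed.

Lemma valid (hm : 0 < m) : valid_stopping_time code.
Proof.
move=> x1 x2 x3; rewrite /Z1 /Z2 /=.
have hN := sN_le x1 x2 x3.
split.
- rewrite /sN; lia.
- exact: leq_trans hN (size_e1 _ _).
- exact: leq_trans hN (size_e2 _ _).
move=> y1 y2 y3; rewrite /Zpairs /Z1 /Z2 /= => E.
have [E1 E2] := zip_take_inj (leq_trans hN (size_e1 _ _)) (leq_trans hN (size_e2 _ _))
   (leq_trans hN (size_e1 _ _)) (leq_trans hN (size_e2 _ _)) E.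
have hk : m + m <= sN x1 x2 x3 by rewrite /sN leq_addr.
rewrite /sN.
rewrite -(take_takel (e1 y1 y3) (_ : m <= sN x1 x2 x3)); last by lia.
rewrite -(take_drop_take (e2 y2 y3) (_ : m + m <= sN x1 x2 x3)) //.
by rewrite E1 E2 take_takel ?take_drop_take //; lia.
Qed.
End C.


Lemma rb (E P u : seq bool) r : zc u <= r -> size E = zc u ->
  rebuild u (take r (E ++ P)) = rebuild u E.
Proof.
move=> h hE; rewrite take_cat hE ltnNge h /= rebuild_cat //; lia.
Qed.

Lemma drop_take_gen (s : seq bool) j n : j <= n -> drop j (take n s) = take (n - j) (drop j s).
Proof. by move=> h; rewrite take_drop subnK. Qed.

Section C.
Variable m : nat.
Local Notation k := (m + m).

Lemma zero_err : zero_error (code m).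
Proof.
move=> x1 x2 x3 /=; rewrite /Z1 /Z2 /=.
set n := sN x1 x2 x3.
have hk : m + m <= n by rewrite /n /sN leq_addr.
set u := xorl (take m x1) (take m x3).
set v := xorl (drop m x2) (drop m x3).
have hzu : zc u <= n - k by rewrite /n /sN e1_take e2_take addKn leq_maxl.
have hzv : zc v <= n - k by rewrite /n /sN e1_take e2_take addKn leq_maxr.
have T1 : take m (take n (e1 x1 x3)) = u by rewrite take_takel ?e1_take //; lia.
have T2 : take m (take n (e2 x2 x3)) = take m x2.
  by rewrite take_takel /e2 ?take_size_cat ?sztake //; lia.
have T3 : take m (drop m (take n (e1 x1 x3))) = drop m x1.
  by rewrite take_drop_take // /e1 drop_size_cat ?szu // take_size_cat ?szdrop.
have T4 : take m (drop m (take n (e2 x2 x3))) = v by rewrite take_drop_take // e2_take.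
have R1 : rebuild u (drop k (take n (e1 x1 x3))) = rebuild u (mask (map negb u) (take m x3)).
  rewrite drop_take_gen // /e1 -/u -drop_drop drop_size_cat ?szu // drop_size_cat ?szdrop //.
  by rewrite rb // size_mask ?count_map // size_map szu sztake.
have R2 : rebuild v (drop k (take n (e2 x2 x3))) = rebuild v (mask (map negb v) (drop m x3)).
  rewrite drop_take_gen // /e2 -/v -drop_drop drop_size_cat ?sztake // drop_size_cat ?szv //.
  by rewrite rb // size_mask ?count_map // size_map szv szdrop.
apply: eq_from_tnth => i; rewrite !tnth_mktuple; congr inord.
rewrite /decv T1 T2 T3 T4 R1 R2 !(tnth_nth false).
have hi := ltn_ord i.
case: ifP => him.
- have hu : nth false u i = (nth false x1 i != nth false x3 i).
    by rewrite nth_xorl ?sztake ?minnn // !nth_take.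
  rewrite nth_take //.
  case: ifP => hb.
    by move: hb; rewrite hu; case: (nth false x1 i); case: (nth false x2 i); case: (nth false x3 i).
  idtac.
  rewrite rebuild_mask ?szu ?sztake ?hb // nth_take //.
  by move: hb; rewrite hu; case: (nth false x1 i); case: (nth false x2 i); case: (nth false x3 i).
- have hj : i - m < m by lia.
  have ei : m + (i - m) = i by lia.
  have hv : nth false v (i - m) = (nth false x2 i != nth false x3 i).
    by rewrite nth_xorl ?szdrop ?minnn // !nth_drop ei.
  rewrite ?nth_take // nth_drop ei.
  case: ifP => hb.
    by move: hb; rewrite hv; case: (nth false x1 i); case: (nth false x2 i); case: (nth false x3 i).
  rewrite rebuild_mask ?szv ?szdrop ?hb // nth_drop ei.
  by move: hb; rewrite hv; case: (nth false x1 i); case: (nth false x2 i); case: (nth false x3 i).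
Qed.
End C.


Lemma sum_tuple_S n (F : n.+1.-tuple bool -> nat) :
  \sum_(x : n.+1.-tuple bool) F x =
  \sum_(x : n.-tuple bool) (F [tuple of true :: x] + F [tuple of false :: x]).
Proof.
rewrite (reindex (fun p : bool * n.-tuple bool => [tuple of p.1 :: p.2])) /=.
  rewrite -(pair_big xpredT xpredT (fun (b : bool) (x : n.-tuple bool) => F [tuple of b :: x])) /= big_bool.
  by rewrite -big_split.
exists (fun t => (thead t, [tuple of behead t])) => [[b x] _ | t _] /=.
  by congr pair; apply: val_inj.
by rewrite [RHS]tuple_eta.
Qed.

Lemma sum_const_t n q : \sum_(x : n.-tuple bool) q = 2 ^ n * q.
Proof. by rewrite sum_nat_const card_tuple card_bool. Qed.

Lemma sum_cnt n p c : size p = n -> size c = n ->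
  2 * \sum_(x : n.-tuple bool) cnt p x c = 2 ^ n * count id p.
Proof.
elim: n p c => [|n IH] [|q p] [|e c] //=.
  by move=> _ _; rewrite big1 // => x _; rewrite tuple0.
move=> [hp] [hc].
rewrite sum_tuple_S /=.
have -> : \sum_(x : n.-tuple bool) ((q && (true == e)) + cnt p x c + ((q && (false == e)) + cnt p x c))
   = \sum_(x : n.-tuple bool) (q + 2 * cnt p x c).
  by apply: eq_bigr => x _; case: q; case: e => /=; lia.
rewrite big_split /= sum_const_t -big_distrr /= mulnDr mulnCA IH // expnS; lia.
Qed.

Lemma sum_cnt2 n p c : size p = n -> size c = n ->
  4 * \sum_(x : n.-tuple bool) (cnt p x c) ^ 2 = 2 ^ n * ((count id p) ^ 2 + count id p).
Proof.
elim: n p c => [|n IH] [|q p] [|e c] //=.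
  by move=> _ _; rewrite big1 // => x _; rewrite tuple0.
move=> [hp] [hc].
rewrite sum_tuple_S /=.
have -> : \sum_(x : n.-tuple bool) (((q && (true == e)) + cnt p x c) ^ 2 + ((q && (false == e)) + cnt p x c) ^ 2)
   = \sum_(x : n.-tuple bool) (q + 2 * q * cnt p x c + 2 * (cnt p x c) ^ 2).
  by apply: eq_bigr => x _; case: q; case: e => /=; lia.
rewrite !big_split /= sum_const_t -!big_distrr /= !mulnDr.
have h1 := sum_cnt hp hc. have h2 := IH _ _ hp hc.
rewrite expnS.
move: h1 h2.
set S := \sum_(x : n.-tuple bool) cnt p x c.
set Q := \sum_(x : n.-tuple bool) (cnt p x c) ^ 2.
move=> h1 h2.
set P := count id p in h1 h2 *.
set K := 2 ^ n in h1 h2 *.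
have qq : q * q = q by case: q.
have -> : \sum_(x : n.-tuple bool) 0 = 0 by rewrite big1.
case: q qq => _ /=; nia.
Qed.


Lemma amgm T d : 2 * T * d <= T ^ 2 + d ^ 2.
Proof.
case: (leqP T d) => h.
- have -> : d = T + (d - T) by lia. set e := d - T. nia.
- have -> : T = d + (T - d) by lia. set e := T - d. nia.
Qed.

Lemma ptwise T a b : 8 * T * maxn a b + 4 * (a * b) <= 4 * T * (a + b) + 2 * a ^ 2 + 2 * b ^ 2 + 2 * T ^ 2.
Proof.
case: (leqP a b) => h.
- have -> : b = a + (b - a) by lia.
  set d := b - a. have := amgm T d. nia.
- have -> : a = b + (a - b) by lia.
  set d := a - b. have := amgm T d. nia.
Qed.

Section C.
Variable m T : nat.
Local Notation k := (m + m).
Definition pA := nseq m true ++ nseq m false.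
Definition pB := nseq m false ++ nseq m true.

Lemma sN_cnt (x1 x2 x3 : k.-tuple bool) : sN x1 x2 x3 = k + maxn (cnt pA x1 x3) (cnt pB x2 x3).
Proof.
by rewrite /sN e1_take e2_take (cnt_take (r:=m)) ?sz // (cnt_drop (r:=m)) ?sz.
Qed.

Lemma inner (c : seq bool) : size c = k ->
  32 * T * (\sum_(x1 : k.-tuple bool) \sum_(x2 : k.-tuple bool) (k + maxn (cnt pA x1 c) (cnt pB x2 c)))
  <= 2 ^ k * 2 ^ k * (32 * T * k + 16 * T * m + 4 * m + 8 * T ^ 2).
Proof.
move=> hc.
set K := 2 ^ k.
have hpA : size pA = k by rewrite size_cat !size_nseq.
have hpB : size pB = k by rewrite size_cat !size_nseq.
have cA : count id pA = m by rewrite count_cat !count_nseq /= mul1n mul0n addn0.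
have cB : count id pB = m by rewrite count_cat !count_nseq /= mul1n mul0n.
have hA := sum_cnt hpA hc. have hA2 := sum_cnt2 hpA hc.
have hB := sum_cnt hpB hc. have hB2 := sum_cnt2 hpB hc.
rewrite cA in hA hA2. rewrite cB in hB hB2. rewrite -/K in hA hA2 hB hB2.
move: hA hA2 hB hB2.
set A := \sum_(x : k.-tuple bool) cnt pA x c.
set A2 := \sum_(x : k.-tuple bool) cnt pA x c ^ 2.
set B := \sum_(x : k.-tuple bool) cnt pB x c.
set B2 := \sum_(x : k.-tuple bool) cnt pB x c ^ 2.
move=> hA hA2 hB hB2.
set X := \sum_(x1 : k.-tuple bool) _.
have H : \sum_(x1 : k.-tuple bool) \sum_(x2 : k.-tuple bool)
           (32 * T * (k + maxn (cnt pA x1 c) (cnt pB x2 c)) + 16 * (cnt pA x1 c * cnt pB x2 c))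
      <= \sum_(x1 : k.-tuple bool) \sum_(x2 : k.-tuple bool)
           (32 * T * k + 16 * T * cnt pA x1 c + 16 * T * cnt pB x2 c + 8 * cnt pA x1 c ^ 2
             + 8 * cnt pB x2 c ^ 2 + 8 * T ^ 2).
  apply: leq_sum => x1 _; apply: leq_sum => x2 _.
  have := ptwise T (cnt pA x1 c) (cnt pB x2 c).
  move: (cnt pA x1 c) (cnt pB x2 c) => a b.
  set M := maxn a b. set P := a * b. set a2 := a ^ 2. set b2 := b ^ 2. set t2 := T ^ 2.
  lia.
have L1 : \sum_(x1 : k.-tuple bool) \sum_(x2 : k.-tuple bool)
           (32 * T * (k + maxn (cnt pA x1 c) (cnt pB x2 c)) + 16 * (cnt pA x1 c * cnt pB x2 c))
         = 32 * T * X + 16 * (A * B).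
  under eq_bigr => x1 _ do rewrite big_split /= -!big_distrr /=.
  rewrite big_split /= -!big_distrr /= big_distrl /=.
  congr (_ + _ * _); apply: eq_bigr => x1 _; by rewrite big_distrr.
have R1 : \sum_(x1 : k.-tuple bool) \sum_(x2 : k.-tuple bool)
           (32 * T * k + 16 * T * cnt pA x1 c + 16 * T * cnt pB x2 c + 8 * cnt pA x1 c ^ 2
             + 8 * cnt pB x2 c ^ 2 + 8 * T ^ 2)
     = K * K * (32 * T * k) + 16 * T * (K * A) + 16 * T * (K * B) + 8 * (K * A2) + 8 * (K * B2) + K * K * (8 * T ^ 2).
  under eq_bigr => x1 _ do rewrite !big_split /= !sum_const_t -!big_distrr /=.
  rewrite !big_split /= !sum_const_t -!big_distrr /=.
  rewrite -/K -/A -/A2 -/B -/B2 !muln0 !addn0.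
  lia.
have AB : 16 * (A * B) = 4 * (K * K * (m * m)).
  have : (2 * A) * (2 * B) = (K * m) * (K * m) by rewrite hA hB.
  lia.
have KA : 16 * T * (K * A) = 8 * T * (K * K * m).
  have : K * (2 * A) = K * (K * m) by rewrite hA.
  move=> h; rewrite -(mulnA 8 T) -(mulnA K K m) -h; lia.
have KB : 16 * T * (K * B) = 8 * T * (K * K * m).
  have : K * (2 * B) = K * (K * m) by rewrite hB.
  move=> h; rewrite -(mulnA 8 T) -(mulnA K K m) -h; lia.
have KA2 : 8 * (K * A2) = 2 * (K * K * (m * m + m)).
  have : K * (4 * A2) = K * (K * (m ^ 2 + m)) by rewrite hA2.
  move=> h; rewrite -(mulnA K K) -[m * m]/(m ^ 2) -h; lia.
have KB2 : 8 * (K * B2) = 2 * (K * K * (m * m + m)).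
  have : K * (4 * B2) = K * (K * (m ^ 2 + m)) by rewrite hB2.
  move=> h; rewrite -(mulnA K K) -[m * m]/(m ^ 2) -h; lia.
move: H; rewrite L1 R1 AB KA KB KA2 KB2.
lia.
Qed.
End C.

Lemma total m T : 32 * T * sumN (code m) <=
  2 ^ (m + m) * (2 ^ (m + m) * 2 ^ (m + m)) * (32 * T * (m + m) + 16 * T * m + 4 * m + 8 * T ^ 2).
Proof.
rewrite /sumN /=.
have E : \sum_(x1 : (m+m).-tuple bool) \sum_(x2 : (m+m).-tuple bool) \sum_(x3 : (m+m).-tuple bool) sN x1 x2 x3
  = \sum_(x3 : (m+m).-tuple bool) \sum_(x1 : (m+m).-tuple bool) \sum_(x2 : (m+m).-tuple bool)
       ((m + m) + maxn (cnt (pA m) x1 x3) (cnt (pB m) x2 x3)).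
  under eq_bigr => x1 _ do rewrite exchange_big /=.
  rewrite exchange_big /=.
  apply: eq_bigr => x3 _; apply: eq_bigr => x1 _; apply: eq_bigr => x2 _.
  by rewrite sN_cnt.
rewrite E big_distrr /=.
rewrite -[X in _ <= X]mulnA -[X in _ <= X]sum_const_t.
apply: leq_sum => x3 _.
exact: inner (size_tuple x3).
Qed.

From Stdlib Require Import Reals Lra Psatz.
Module RB.
Open Scope R_scope.
Lemma real_bound (t S K3 d : R) : 0 < d -> 1 < t * d -> 1 <= t -> 0 < K3 -> 0 < S ->
  32 * t * S <= K3 * (80 * t ^ 3 + 12 * t ^ 2) ->
  4 / 5 - d <= (2 * t ^ 2) / (S / K3).
Proof.
intros hd htd ht hK hS h.
set (E := S / K3).
assert (hE : 0 < E) by (unfold E; apply Rdiv_lt_0_compat; lra).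
assert (hE2 : 32 * t * E <= 80 * t ^ 3 + 12 * t ^ 2).
{ unfold E. apply (Rmult_le_reg_r K3); [lra|].
  replace (32 * t * (S / K3) * K3) with (32 * t * S) by (field; lra). nra. }
apply (Rmult_le_reg_r E); [lra|].
replace (2 * t ^ 2 / E * E) with (2 * t ^ 2) by (field; lra).
destruct (Rle_dec (4/5 - d) 0) as [hn|hp].
- assert (0 <= 2 * t ^ 2) by nra. nra.
- assert (hE3 : 8 * E <= 20 * t ^ 2 + 3 * t).
  { apply (Rmult_le_reg_l (4 * t)); [lra|]. nra. }
  assert ((4/5 - d) * (8 * E) <= (4/5 - d) * (20 * t ^ 2 + 3 * t)) by (apply Rmult_le_compat_l; lra).
  nra.
Qed.

End RB.
Import RB.
Close Scope R_scope.


Lemma sumN_pos m : 0 < m -> 0 < sumN (code m).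
Proof.
move=> hm.
rewrite /sumN /=.
apply: (@leq_trans (\sum_(x1 : (m+m).-tuple bool) 1)).
  by rewrite sum_const_t muln1 expn_gt0.
apply: leq_sum => x1 _.
apply: (@leq_trans (\sum_(x2 : (m+m).-tuple bool) 1)).
  by rewrite sum_const_t muln1 expn_gt0.
apply: leq_sum => x2 _.
apply: (@leq_trans (\sum_(x3 : (m+m).-tuple bool) 1)).
  by rewrite sum_const_t muln1 expn_gt0.
apply: leq_sum => x3 _.
rewrite /sN; lia.
Qed.

Lemma powE a b : Nat.pow a b = expn a b.
Proof. elim: b => [|b IH] //=; by rewrite expnS IH. Qed.

Lemma rate_bound (d : R) (T : nat) : (0 < d)%R -> (1 < INR T * d)%R ->
  (4 / 5 - d <= rate (code (T * T)))%R.
Proof.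
move=> hd hT.
have T1 : 0 < T.
  case: T hT => [|n] //=. rewrite Rmult_0_l. lra.
set m := T * T.
have H := total m T.
set K3 := expn 2 (m + m) * (expn 2 (m + m) * expn 2 (m + m)) in H.
have EK : Nat.pow 2 (Nat.mul 3 (m + m)) = K3 by rewrite powE /K3 -!expnD; congr expn; lia.
rewrite /rate /ExpN EK.
have -> : (ln (INR 2) / ln 2 = 1)%R.
  have -> : INR 2 = 2%R by simpl; lra.
  have := ln_lt_2. move=> h. field. lra.
rewrite Rmult_1_r.
have H' : 32 * T * sumN (code m) <= K3 * (80 * (T * T * T) + 12 * (T * T)).
  apply: (leq_trans H); rewrite leq_mul2l; apply/orP; right.
  rewrite /m -(mulnn T); lia.
have hS : (0 < INR (sumN (code m)))%R.
  apply: lt_0_INR; apply/ltP; apply: sumN_pos; by rewrite /m muln_gt0 T1.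
move: H' hS. set S := sumN (code m). move=> H' hS.
have hK : (0 < INR K3)%R.
  apply: lt_0_INR; apply/ltP; by rewrite /K3 !muln_gt0 !expn_gt0.
clearbody K3 S.
have HR := le_INR _ _ (elimT leP H').
rewrite -!multE -!plusE !mult_INR !plus_INR !mult_INR in HR.
have -> : INR (m + m) = (2 * INR T ^ 2)%R.
  rewrite -plusE plus_INR /m -multE mult_INR; simpl; lra.
have hT1 : (1 <= INR T)%R.
  have := le_INR 1 T (elimT leP T1). simpl. lra.
apply: real_bound => //.
simpl in HR |- *. nra.
Qed.


Lemma part1 : (forall delta : R, (0 < delta)%R ->
     exists k : nat, ~~ odd k /\
       exists c : VLCode k, zero_error_code c /\ (4 / 5 - delta <= rate c)%R).
Proof.
move=> d hd.
have [n hn] := INR_archimed d 1 hd.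
have n1 : 0 < n by case: n hn => [|n] //=; rewrite Rmult_0_l; lra.
exists ((n * n) + (n * n)); split; first by rewrite addnn odd_double.
exists (code (n * n)); split; last by apply: rate_bound => //; lra.
split; first by apply: valid; rewrite muln_gt0 n1.
exact: zero_err.
Qed.

Theorem mainTheorem14 :
  (forall delta : R, (0 < delta)%R ->
     exists k : nat, ~~ odd k /\
       exists c : VLCode k, zero_error_code c /\ (4 / 5 - delta <= rate c)%R)
  /\
  (forall U : R, is_upper_bound achievable_rate U -> (4 / 5 <= U)%R).
Proof.
split; first exact: part1.
move=> U hU.
apply: Rnot_lt_le => h.
have [k [_ [c [hc hr]]]] := @part1 ((4/5 - U)/2)%R ltac:(lra).
have : (rate c <= U)%R by apply: hU; exists k, c.
lra.
Qed.
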